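(* Let $p$ be a positive integer and $n>0$ an integer such that $\mathcal{S}_{p,n}:=p^2 16^n+1$ is prime. Let $E/\mathbb{F}_{\mathcal{S}_{p,n}}$ be the elliptic curve $y^2=x^3-x$. Then $\#E(\mathbb{F}_{\mathcal{S}_{p,n}})=p^2 16^n$. *)

(* Defs.v *)
From HB Require Import structures.
From mathcomp Require Import all_boot all_order all_algebra all_field.
Set Implicit Arguments. Unset Strict Implicit. Unset Printing Implicit Defensive.
Import GRing.Theory.
Local Open Scope ring_scope.

(* The set of F-rational points of the (short Weierstrass) curve
   y^2 = x^3 + a x + b in projective coordinates: [None] is the point at
   infinity O, [Some (x, y)] is an affine point. *)
Definition ec_points (F : finFieldType) (a b : F) : {set option (F * F)} :=
  [set P | if P is Some (x, y) then y ^+ 2 == x ^+ 3 + a * x + b else true].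

(* Main.v *)
Require Import Defs.
From HB Require Import structures.
From mathcomp Require Import all_boot all_order all_algebra all_field.
From mathcomp Require Import zify ring lra.
Set Implicit Arguments. Unset Strict Implicit. Unset Printing Implicit Defensive.
Import GRing.Theory Num.Theory Order.TTheory.
Local Open Scope ring_scope.

Section NT.
Lemma prime_dvdz (q : nat) (u v : int) : prime q -> (q%:Z %| u * v)%Z ->
  exists k : int, u = k * q%:Z \/ v = k * q%:Z.
Proof.
move=> pq; rewrite dvdzE abszM Euclid_dvdM // => /orP [] h.
  have /dvdzP [k hk] : (q%:Z %| u)%Z by rewrite dvdzE.
  by exists k; left.

have /dvdzP [k hk] : (q%:Z %| v)%Z by rewrite dvdzE.
by exists k; right.
Qed.

Lemma sq_small (k q w : int) : 0 < q -> (k * q) ^+ 2 + w ^+ 2 = q ^+ 2 -> k = 0 \/ w = 0.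
Proof.
move=> q0 h.
have [->|k0] := eqVneq k 0; first by left.
right.
have hk : 1 <= k ^+ 2 by rewrite -(expr1n _ 2); move: k0; timeout 20 nia.
timeout 20 nia.
Qed.

Lemma odd_nz (K w : int) : 4 * K - 1 + 2 * w = 0 -> False.
Proof. lia. Qed.
Lemma odd_nz2 (K w : int) : 4 * K - 1 - 2 * w = 0 -> False.
Proof. lia. Qed.
Lemma fin1 (K : int) : 4 * K - 1 - 1 = 0 -> False.
Proof. lia. Qed.
Lemma fin2 (K : int) : 4 * K - 1 + 1 = 0 -> 8 * K - 2 = -2.
Proof. lia. Qed.

Lemma keylem (q : nat) (A t b : int) : q%:Z = 1 + b ^+ 2 -> A ^+ 2 + t ^+ 2 = q%:Z ->
  t = A * b -> A ^+ 2 = 1.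
Proof.
move=> hq hAB ht.
have : A ^+ 2 + (A * b) ^+ 2 - (1 + b ^+ 2) = 0 by rewrite -ht hAB hq subrr.
rewrite (_ : A ^+ 2 + (A * b) ^+ 2 - (1 + b ^+ 2) = (A ^+ 2 - 1) * (1 + b ^+ 2)); last by ring.
move/eqP; rewrite mulf_eq0 => /orP [] /eqP h.
  by apply/eqP; rewrite -subr_eq0 h.
have := sqr_ge0 b; move: h; set z := b ^+ 2; timeout 20 lia.
Qed.

Lemma nt (S T b c K : int) (q : nat) : prime q -> q%:Z = 1 + b ^+ 2 -> b = 2 * c ->
  S ^+ 2 + T ^+ 2 = 4 * q%:Z -> S = 8 * K - 2 -> S = -2.
Proof.
move=> pq hq hb hST hS.
have [t ht] : exists t, T = 2 * t.
  have [t [ht|ht]] : exists t, T = 2 * t \/ T = 2 * t + 1.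
    exists (T %/ 2)%Z; have := divz_eq T 2; have := modz_ge0 T (isT : (2:int) != 0).
    have := ltz_pmod T (isT : (0 < 2 :> int)); timeout 20 lia.
  - by exists t.
  - exfalso; move: hST; rewrite ht hS; timeout 20 nia.
set A := 4 * K - 1.
have hAB : A ^+ 2 + t ^+ 2 = q%:Z by move: hST; rewrite hS ht /A; timeout 20 nia.
have huv : (A * b - t) * (A * b + t) = (A ^+ 2 - 1) * q%:Z.
  by move: hAB; rewrite hq; timeout 20 nia.
have q0 : (0 < q%:Z) by rewrite ltz_nat prime_gt0.
have hA1 : A ^+ 2 = 1.
  have := @prime_dvdz q (A * b - t) (A * b + t) pq.
  rewrite huv => /(_ (dvdz_mull _ (dvdzz _))) [k [hk|hk]].
  - have e : (A * b - t) ^+ 2 + (A + t * b) ^+ 2 = q%:Z ^+ 2.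
      rewrite (_ : q%:Z ^+ 2 = (1 + b ^+ 2) * (A ^+ 2 + t ^+ 2)); first ring.
      by rewrite hAB -hq expr2.
    rewrite hk in e; case: (sq_small q0 e) => h.
      have ht' : t = A * b by move/eqP: hk; rewrite h mul0r subr_eq0 => /eqP.
      exact: (keylem hq hAB ht').
    exfalso; move: h; rewrite hb /A.
    rewrite (_ : t * (2 * c) = 2 * (t * c)); last by ring.
    exact: odd_nz.
  - have e : (A * b + t) ^+ 2 + (A - t * b) ^+ 2 = q%:Z ^+ 2.
      rewrite (_ : q%:Z ^+ 2 = (1 + b ^+ 2) * (A ^+ 2 + t ^+ 2)); first ring.
      by rewrite hAB -hq expr2.
    rewrite hk in e; case: (sq_small q0 e) => h.
      have ht' : t = - (A * b) by move/eqP: hk; rewrite h mul0r addrC addr_eq0 => /eqP.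
      by apply: (keylem (b := - b) _ hAB); [rewrite sqrrN | rewrite ht' mulrN].
    exfalso; move: h; rewrite hb /A.
    rewrite (_ : t * (2 * c) = 2 * (t * c)); last by ring.
    exact: odd_nz2.
have : (A - 1) * (A + 1) = 0 by rewrite -subr_sqr hA1 expr1n subrr.
move/eqP; rewrite mulf_eq0 => /orP [] /eqP h; rewrite hS; move: h; rewrite /A.
  by move/fin1.
exact: fin2.
Qed.

End NT.

Section Main.
Variable F : finFieldType.
Variable m : nat.
Hypothesis hq : #|F| = (2 * m).+1.
Hypothesis m4 : (4 %| m)%N.
Hypothesis m0 : (0 < m)%N.
Hypothesis two_nz : (2%:R : F) != 0.

Lemma card_roots_le (k : nat) (c : F) : (0 < k)%N -> (#|[set x : F | x ^+ k == c]| <= k)%N.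
Proof.
move=> k0.
have := @max_poly_roots _ ('X^k - c%:P) (enum [set x : F | x ^+ k == c]).
rewrite size_XnsubC // cardE ltnS; apply.
- by rewrite -size_poly_eq0 size_XnsubC.
- by apply/allP => x; rewrite mem_enum inE /root !hornerE subr_eq0.
- exact: enum_uniq.
Qed.

Lemma fermat (x : F) : x != 0 -> x ^+ (2 * m) = 1.
Proof.
by move=> x0; apply: (mulfI x0); rewrite mulr1 -exprS -hq expf_card.
Qed.

Lemma one_neq_m1 : (1 : F) != -1.
Proof.
apply/negP => /eqP h; move: two_nz.
have -> : (2%:R : F) = 1 - (-1) by ring.
by rewrite -h subrr eqxx.
Qed.

Lemma xm_cases (x : F) : x != 0 -> x ^+ m = 1 \/ x ^+ m = -1.
Proof.
move=> x0; have : (x ^+ m - 1) * (x ^+ m + 1) = 0.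
  by rewrite -subr_sqr expr1n -exprM mulnC fermat // subrr.
by move/eqP; rewrite mulf_eq0 subr_eq0 addr_eq0 => /orP[] /eqP; auto.
Qed.

Definition chi (x : F) : int := if x == 0 then 0 else if x ^+ m == 1 then 1 else -1.

Lemma chi0 : chi 0 = 0. Proof. by rewrite /chi eqxx. Qed.

Lemma chi_eq0 x : (chi x == 0) = (x == 0).
Proof. by rewrite /chi; case: (x =P 0) => [_|_]; [rewrite eqxx | case: ifP]. Qed.

Lemma chi_m1 x : x ^+ m = -1 -> chi x = -1.
Proof.
move=> h; have hm : ((-1:F) == 1) = false by rewrite eq_sym (negbTE one_neq_m1).
rewrite /chi h hm; case: (x =P 0) => // x0; move: h; rewrite x0 expr0n.
by case: m m0 => // k _ /eqP; rewrite eq_sym oppr_eq0 oner_eq0.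
Qed.

Lemma chi1 x : x != 0 -> x ^+ m = 1 -> chi x = 1.
Proof. by move=> x0 h; rewrite /chi (negbTE x0) h eqxx. Qed.

Lemma chi_cases x : x != 0 -> chi x = 1 \/ chi x = -1.
Proof. by move=> x0; case: (xm_cases x0) => h; [left; apply: chi1|right; apply: chi_m1]. Qed.

Lemma chiM x y : chi (x * y) = chi x * chi y.
Proof.
have [->|x0] := eqVneq x 0; first by rewrite mul0r chi0 mul0r.
have [->|y0] := eqVneq y 0; first by rewrite mulr0 chi0 mulr0.
have xy0 : x * y != 0 by rewrite mulf_neq0.
case: (xm_cases x0) => hx; case: (xm_cases y0) => hy.
- by rewrite (chi1 x0 hx) (chi1 y0 hy) (chi1 xy0) ?mulr1 // exprMn hx hy mulr1.
- by rewrite (chi1 x0 hx) (chi_m1 hy) (chi_m1 (x:=x*y)) ?mul1r // exprMn hx hy mul1r.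
- by rewrite (chi_m1 hx) (chi1 y0 hy) (chi_m1 (x:=x*y)) ?mulr1 // exprMn hx hy mulr1.
- by rewrite (chi_m1 hx) (chi_m1 hy) (chi1 xy0) ?mulrNN ?mulr1 // exprMn hx hy mulrNN mulr1.
Qed.

Lemma chi_sq x : x != 0 -> chi (x ^+ 2) = 1.
Proof. by move=> x0; rewrite chi1 ?expf_neq0 // -exprM fermat. Qed.

Lemma chi2 x : chi x ^+ 2 = (x != 0)%:R.
Proof.
have [->|x0] := eqVneq x 0; first by rewrite chi0 expr0n.
by case: (chi_cases x0) => ->.
Qed.

Lemma chi_m1_1 : chi (-1) = 1.
Proof.
apply: chi1; first by rewrite oppr_eq0 oner_eq0.
by case/dvdnP: m4 => k ->; rewrite -signr_odd oddM andbF expr0.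
Qed.

Lemma card_nz : #|[set c : F | c != 0]| = (2 * m)%N.
Proof.
rewrite -[RHS]/((2 * m).+1.-1)%N -hq -(cardsC1 0); apply: eq_card => c.
by rewrite !inE.
Qed.

Lemma sq_count (u : F) : (#|[set c : F | c ^+ 2 == u]| <= 2)%N.
Proof. exact: card_roots_le. Qed.

Lemma euler_conv x : chi x = 1 -> exists c, c ^+ 2 = x.
Proof.
move=> hx.
have x0 : x != 0 by apply: contra_eqN hx => /eqP ->; rewrite chi0.
have xm : x ^+ m == 1.
  by move: hx; rewrite /chi (negbTE x0); case: ifP => // _ /eqP; rewrite -subr_eq0 opprK.
set R := [set y : F | y ^+ m == 1].
set N := [set c : F | c != 0].
set Q := (fun c : F => c ^+ 2) @: N.
have QR : Q \subset R.
  apply/subsetP => y /imsetP [c]; rewrite inE => c0 ->.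
  by rewrite inE -exprM fermat.
have cR : (#|R| <= m)%N by apply: card_roots_le.
have cQ : (2 * m <= 2 * #|Q|)%N.
  rewrite -card_nz -sum1_card (partition_big_imset (fun c : F => c ^+ 2)) /= -/Q.
  rewrite mulnC -sum_nat_const; apply: leq_sum => u _.
  apply: leq_trans (sq_count u).
  rewrite (eq_bigl (mem [set c in N | c ^+ 2 == u])); last by move=> c; rewrite !inE.
  rewrite sum1_card; apply: subset_leq_card; apply/subsetP => c; rewrite !inE.
  by case/andP.
have QR' : Q = R by apply/eqP; rewrite eqEcard QR /=; apply: leq_trans cR _; rewrite -(leq_pmul2l (isT : (0 < 2)%N)).
have : x \in Q by rewrite QR' inE.
by case/imsetP => c _ ->; exists c.
Qed.

Lemma x_neq_negx (x : F) : x != 0 -> x != - x.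
Proof.
move=> x0; apply/negP => /eqP h; move: two_nz.
have -> : (2%:R : F) = (x - (- x)) / x by field.
by rewrite -h subrr mul0r eqxx.
Qed.

Lemma exists_nonsq : exists n, chi n = -1.
Proof.
case: (boolP [exists n, chi n == -1]) => [/existsP [n /eqP]|]; first by exists n.
rewrite negb_exists => /forallP hall; exfalso.
have : ([set c : F | c != 0] \subset [set y : F | y ^+ m == 1]).
  apply/subsetP => c; rewrite !inE => c0; case: (xm_cases c0) => [->//|/chi_m1 h].
  by move: (hall c); rewrite h eqxx.
move/subset_leq_card; rewrite card_nz => h.
have := leq_trans h (card_roots_le 1 m0); rewrite leqNgt.
by rewrite -[X in (X < _)%N]mul1n ltn_pmul2r // .
Qed.

Lemma sum_chi : \sum_(x : F) chi x = 0.
Proof.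
have [n hn] := exists_nonsq.
have n0 : n != 0 by apply: contra_eqN hn => /eqP ->; rewrite chi0.
have h : \sum_(x : F) chi x = - \sum_(x : F) chi x.
  rewrite {1}(reindex_inj (mulfI n0)) /=.
  under eq_bigr do rewrite chiM hn.
  by rewrite -sumrN; apply: eq_bigr => x _; rewrite mulN1r.
by move: h; set s := \sum_(x : F) chi x; lia.
Qed.

Lemma exists_i : exists i : F, i ^+ 2 = -1.
Proof. apply: euler_conv; exact: chi_m1_1. Qed.

Lemma sq_card (c : F) : (#|[set y : F | y ^+ 2 == c]| : int) = 1 + chi c.
Proof.
have [->|c0] := eqVneq c 0.
  rewrite chi0 addr0 (_ : [set y : F | y ^+ 2 == 0] = [set 0]) ?cards1 //.
  by apply/setP => y; rewrite !inE sqrf_eq0.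
case: (chi_cases c0) => hc.
  have [r hr] := euler_conv hc.
  have r0 : r != 0 by apply: contra_neq c0 => r0; rewrite -hr r0 expr0n.
  rewrite hc (_ : [set y : F | y ^+ 2 == c] = [set r; -r]) ?cards2 ?x_neq_negx //.
  by apply/setP => y; rewrite !inE -hr eqf_sqr.
rewrite hc subrr (_ : [set y : F | y ^+ 2 == c] = set0) ?cards0 //.
apply/setP => y; rewrite !inE; apply/negP => /eqP hy.
have y0 : y != 0 by apply: contra_neq c0 => y0; rewrite -hy y0 expr0n.
by move: hc; rewrite -hy chi_sq.
Qed.

Lemma chi_one : chi 1 = 1.
Proof. by rewrite chi1 ?oner_neq0 ?expr1n. Qed.

Lemma chiV x : chi (x^-1) = chi x.
Proof.
have [->|x0] := eqVneq x 0; first by rewrite invr0.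
have h : chi x * chi (x^-1) = 1 by rewrite -chiM mulfV // chi_one.
have xi0 : x^-1 != 0 by rewrite invr_eq0.
by case: (chi_cases x0) => hx; case: (chi_cases xi0) => hy; move: h; rewrite hx hy.
Qed.

Lemma sum_nz : \sum_(a : F) ((a != 0)%:R : int) = (2 * m)%:R.
Proof.
rewrite (eq_bigr (fun a => if a != 0 then 1 else 0)); last by move=> a _; case: (a != 0).
rewrite -big_mkcond sumr_const -card_nz; congr (_ *+ _).
by apply: eq_card => a; rewrite !inE.
Qed.

Lemma sum_eq0 : \sum_(a : F) ((a == 0)%:R : int) = 1.
Proof. by rewrite (bigD1 0) //= eqxx big1 ?addr0 // => a /negbTE ->. Qed.

Lemma jac (k : F) : \sum_(a : F) chi a * chi (a + k) = if k == 0 then (2 * m)%:R else -1.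
Proof.
have [->|k0] := eqVneq k 0.
  rewrite -sum_nz; apply: eq_bigr => a _; by rewrite addr0 -expr2 chi2.
rewrite (eq_bigr (fun a => chi (1 + k * a^-1) - (a == 0)%:R)); last first.
  move=> a _; have [->|a0] := eqVneq a 0; first by rewrite chi0 mul0r invr0 mulr0 addr0 chi_one subrr.
  rewrite subr0 -chiV -chiM; congr chi; field; exact: a0.
rewrite sumrB sum_eq0.
have -> : \sum_(a : F) chi (1 + k * a^-1) = \sum_(a : F) chi (1 + k * a).
  by rewrite (reindex_inj invr_inj) /=; apply: eq_bigr => a _; rewrite invrK.
have hinj : injective (fun a : F => 1 + k * a) by move=> a b /addrI /(mulfI k0).
have -> : \sum_(a : F) chi (1 + k * a) = \sum_(a : F) chi a by rewrite [RHS](reindex_inj hinj).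
by rewrite sum_chi sub0r.
Qed.

Definition phi (a : F) : int := \sum_(x : F) chi x * chi (x ^+ 2 + a).

Lemma jac2 (c d : F) : \sum_(a : F) chi (c + a) * chi (d + a) = if c == d then (2 * m)%:R else -1.
Proof.
rewrite (reindex_inj (addrI (-c))) /=.
have -> : (c == d) = (d - c == 0) by rewrite subr_eq0 eq_sym.
rewrite -jac; apply: eq_bigr => a _; congr (chi _ * chi _).
  by rewrite addrA subrr add0r.
by rewrite addrA addrC addrA [a + d]addrC.
Qed.

Lemma sum_delta (G : F -> int) x : \sum_(y : F) G y * (y == x)%:R = G x.
Proof.
by rewrite (bigD1 x) //= eqxx mulr1 big1 ?addr0 // => y /negbTE ->; rewrite mulr0.
Qed.

Lemma chiN x : chi (- x) = chi x.
Proof. by rewrite -mulN1r chiM chi_m1_1 mul1r. Qed.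

Lemma inner_y x : \sum_(y : F) chi x * chi y * (x ^+ 2 == y ^+ 2)%:R = 2 * (x != 0)%:R.
Proof.
have [->|x0] := eqVneq x 0; first by rewrite chi0 big1 ?mulr0 // => y _; rewrite !mul0r.
rewrite mulr1 (eq_bigr (fun y => (chi x * chi y) * (y == x)%:R + (chi x * chi y) * (y == - x)%:R)).
  rewrite big_split /= !(sum_delta (fun y => chi x * chi y)) chiN -expr2 chi2 x0.
  by [].
move=> y _; rewrite -mulrDr; congr (_ * _).
rewrite eq_sym eqf_sqr; have [->|yx] := eqVneq y x.
  by rewrite (negbTE (x_neq_negx x0)).
by rewrite /= add0r.
Qed.

Lemma sum_phi2 : \sum_(a : F) phi a ^+ 2 = (((2 * m).+1 * (2 * m) * 2)%N)%:R.
Proof.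
under eq_bigr do rewrite expr2 /phi mulr_suml; under eq_bigr do under eq_bigr do rewrite mulr_sumr.
rewrite exchange_big /=; under eq_bigr do rewrite exchange_big /=.
have h : forall x y : F, \sum_(a : F) chi x * chi (x ^+ 2 + a) * (chi y * chi (y ^+ 2 + a)) =
   ((2 * m).+1)%:R * (chi x * chi y * (x ^+ 2 == y ^+ 2)%:R) - chi x * chi y.
  move=> x y; rewrite (eq_bigr (fun a => chi x * chi y * (chi (x ^+ 2 + a) * chi (y ^+ 2 + a)))).
    rewrite -mulr_sumr jac2; case: (x ^+ 2 == y ^+ 2); rewrite /=.
      rewrite mulr1 mulrC -{1}[X in _ = _ - X]mul1r -mulrBl. congr (_ * _).
      by rewrite -natr1 addrK.
    by rewrite mulrN1 !mulr0 sub0r.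
  by move=> a _; ring.
under eq_bigr do under eq_bigr do rewrite h.
under eq_bigr do rewrite sumrB -mulr_sumr inner_y.
rewrite sumrB -mulr_sumr -mulr_sumr sum_nz.
have -> : \sum_(x : F) \sum_(y : F) chi x * chi y = 0.
  by rewrite big1 // => x _; rewrite -mulr_sumr sum_chi mulr0.
by rewrite subr0 !natrM; ring.
Qed.

Lemma phi_scale a c : c != 0 -> phi (a * c ^+ 2) = chi c * phi a.
Proof.
move=> c0; rewrite /phi (reindex_inj (mulfI c0)) /= mulr_sumr; apply: eq_bigr => x _.
have -> : (c * x) ^+ 2 + a * c ^+ 2 = c ^+ 2 * (x ^+ 2 + a) by ring.
by rewrite [chi (c ^+ 2 * _)]chiM chi_sq // chiM; ring.
Qed.

Lemma phi0 : phi 0 = 0.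
Proof.
rewrite /phi -[RHS]sum_chi; apply: eq_bigr => x _.
rewrite addr0; have [->|x0] := eqVneq x 0; first by rewrite chi0 mul0r.
by rewrite chi_sq // mulr1.
Qed.

Lemma phi_class (n : F) : chi n = -1 -> forall a : F,
  phi a ^+ 2 = (chi a == 1)%:R * phi (-1) ^+ 2 + (chi a == -1)%:R * phi n ^+ 2.
Proof.
move=> hn a.
have n0 : n != 0 by apply: contra_eqN hn => /eqP ->; rewrite chi0.
have [->|a0] := eqVneq a 0; first by rewrite phi0 chi0 /= expr0n /= !mul0r addr0.
case: (chi_cases a0) => ha; rewrite ha /=.
- have [c hc] : exists c, c ^+ 2 = - a by apply: euler_conv; rewrite chiN.
  have c0 : c != 0 by apply: contra_neq a0 => c0; apply/eqP; rewrite -oppr_eq0 -hc c0 expr0n.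
  have -> : a = -1 * c ^+ 2 by rewrite hc mulN1r opprK.
  by rewrite phi_scale // exprMn chi2 c0 mul1r mul0r addr0.
- have [c hc] : exists c, c ^+ 2 = a / n by apply: euler_conv; rewrite chiM chiV ha hn.
  have c0 : c != 0 by apply: contra_neq a0 => c0; apply/eqP; move: hc; rewrite c0 expr0n => /esym/eqP; rewrite mulf_eq0 invr_eq0 (negbTE n0) orbF.
  have -> : a = n * c ^+ 2 by rewrite hc; field.
  by rewrite phi_scale // exprMn chi2 c0 mul1r mul0r add0r.
Qed.

Lemma four_sq (n : F) : chi n = -1 -> phi (-1) ^+ 2 + phi n ^+ 2 = (4 * (2 * m).+1)%:R.
Proof.
move=> hn.
have hs := sum_phi2; rewrite (eq_bigr _ (fun a _ => phi_class hn a)) big_split /= -!mulr_suml in hs.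
set P := \sum_(a : F) ((chi a == 1)%:R : int) in hs.
set M := \sum_(a : F) ((chi a == -1)%:R : int) in hs.
have h1 : P + M = (2 * m)%:R.
  rewrite -sum_nz -big_split /=; apply: eq_bigr => a _.
  have [->|a0] := eqVneq a 0; first by rewrite chi0.
  by case: (chi_cases a0) => ->.
have h2 : P - M = 0.
  rewrite -sum_chi -sumrB; apply: eq_bigr => a _.
  have [->|a0] := eqVneq a 0; first by rewrite chi0.
  by case: (chi_cases a0) => ->.
have hP : P = m%:R by move: h1 h2; rewrite natrM; lia.
have hM : M = m%:R by move: h1 h2; rewrite natrM; lia.
rewrite hP hM -mulrDr in hs.
apply: (mulfI (_ : (m%:R : int) != 0)); first by rewrite pnatr_eq0 -lt0n.
by rewrite hs !natrM; ring.
Qed.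

Definition f (x : F) := x ^+ 3 - x.
Definition X := [set x : F | chi (f x) == -1].
Definition hh (x : F) := x ^+ 2 + (x ^+ 2)^-1.

Lemma X_props x : x \in X -> [/\ x != 0, x ^+ 2 != 1 & x ^+ 2 != -1].
Proof.
rewrite inE => /eqP hx.
have fx0 : f x != 0 by apply: contra_eqN hx => /eqP ->; rewrite chi0.
have ef : f x = x * (x ^+ 2 - 1) by rewrite /f; ring.
split.
- by apply: contra_neq fx0 => h; rewrite ef h mul0r.
- by apply: contra_neq fx0 => h; rewrite ef h subrr mulr0.
apply/negP => /eqP h.
have x1 : 1 - x != 0.
  rewrite subr_eq0; apply/negP => /eqP h1; move: h; rewrite -h1 expr1n => /eqP.
  by rewrite (negbTE one_neq_m1).
have : f x = (1 - x) ^+ 2.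
  rewrite ef h; have -> : (1 - x) ^+ 2 = 1 - 2%:R * x + x ^+ 2 by ring.
  by rewrite h; ring.
by move=> e; move: hx; rewrite e chi_sq // => /eqP; rewrite eq_sym (negbTE one_neq_m1).
Qed.

Lemma XN x : (- x \in X) = (x \in X).
Proof. by rewrite !inE /f (_ : (- x) ^+ 3 - - x = - (x ^+ 3 - x)) ?chiN //; ring. Qed.

Lemma XV x : x != 0 -> (x^-1 \in X) = (x \in X).
Proof.
move=> x0; rewrite !inE /f.
have -> : x^-1 ^+ 3 - x^-1 = - (x ^+ 3 - x) * ((x ^+ 2)^-1) ^+ 2 by field.
by rewrite chiM chiN chi_sq ?mulr1 // invr_eq0 expf_neq0.
Qed.

Lemma chi_fN x : chi (f (- x)) = chi (f x).
Proof. by move: (XN x); rewrite !inE; rewrite /f (_ : (- x) ^+ 3 - - x = - (x ^+ 3 - x)) ?chiN //; ring. Qed.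

Lemma chi_fV x : x != 0 -> chi (f x^-1) = chi (f x).
Proof.
move=> x0; rewrite /f.
have -> : x^-1 ^+ 3 - x^-1 = - (x ^+ 3 - x) * ((x ^+ 2)^-1) ^+ 2 by field.
by rewrite chiM chiN chi_sq ?mulr1 // invr_eq0 expf_neq0.
Qed.

Lemma fiber_card x0 : x0 \in X -> #|[set y in X | hh y == hh x0]| = 4%N.
Proof.
move=> hx0; have [x00 x01 x0m1] := X_props hx0.
have xi0 : x0^-1 != 0 by rewrite invr_eq0.
pose s := [:: x0; - x0; x0^-1; - x0^-1].
have -> : [set y in X | hh y == hh x0] = [set y in s].
  apply/setP => y; rewrite [y \in [set _ in X | _]]in_set [y \in [set _ in s]]in_set; apply/andP/idP.
  - case => yX /eqP hy; have [y0 _ _] := X_props yX.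
    have : (y ^+ 2 - x0 ^+ 2) * (1 - ((x0 * y) ^+ 2)^-1) = 0.
      rewrite -[RHS](subrr (hh x0)) -{1}hy /hh; field.
      by rewrite x00.
    rewrite /s !inE; move/eqP; rewrite mulf_eq0 subr_eq0 eqf_sqr => /orP [/orP [->//|->]|].
      by rewrite !orbT.
    rewrite subr_eq0 eq_sym invr_eq1 -(expr1n _ 2) eqf_sqr => /orP [] /eqP h.
      have -> : y = x0^-1 by apply: (mulfI x00); rewrite h mulfV.
      by rewrite eqxx !orbT.
    have -> : y = - x0^-1 by apply: (mulfI x00); rewrite h mulrN mulfV.
    by rewrite eqxx !orbT.
  - have hx0' : chi (f x0) == -1 by move: hx0; rewrite inE.
    rewrite /s !inE => /or4P [] /eqP ->; split => //.
    + by rewrite chi_fN.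
    + by rewrite /hh sqrrN.
    + by rewrite chi_fV.
    + by rewrite /hh; apply/eqP; field; rewrite ?x00 ?oner_neq0.
    + by rewrite chi_fN chi_fV.
    + by rewrite /hh; apply/eqP; field; rewrite ?x00 ?oner_neq0.
rewrite cardsE; apply/card_uniqP.
have n2 : x0 != x0^-1.
  by apply: contra_neq x01 => h; rewrite expr2 {2}h mulfV.
have n3 : x0 != - x0^-1.
  by apply: contra_neq x0m1 => h; rewrite expr2 {2}h mulrN mulfV.
have n4 : - x0 != x0^-1.
  by apply: contra_neq x0m1 => h; rewrite expr2 -{1}(opprK x0) h mulNr mulVf.
have n5 : - x0 != - x0^-1 by rewrite eqr_opp.
rewrite /s /= !inE !negb_or n2 n3 n4 n5 !x_neq_negx //.
Qed.

Lemma card_X4 : (4 %| #|X|)%N.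
Proof.
rewrite -sum1_card (partition_big_imset hh) /=.
apply: dvdn_sum => v /imsetP [x0 hx0 ->].
rewrite (eq_bigl (mem [set y in X | hh y == hh x0])); last by move=> y; rewrite !inE.
by rewrite sum1_card fiber_card.
Qed.

Lemma sum_ind (P : pred F) : \sum_(x : F) ((P x)%:R : int) = (#|P|)%:R.
Proof.
rewrite (eq_bigr (fun x => if P x then 1 else 0)); last by move=> x _; case: (P x).
by rewrite -big_mkcond sumr_const.
Qed.

Lemma sum_delta1 (a : F) : \sum_(x : F) ((x == a)%:R : int) = 1.
Proof. by rewrite sum_ind card1. Qed.

Lemma phi_m1 : phi (-1) = ((2 * m).+1)%:R - 3 - 2 * (#|X|)%:R.
Proof.
have h1 : forall x : F, chi x * chi (x ^+ 2 + -1) =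
   1 - ((x == 0)%:R + (x == 1)%:R + (x == -1)%:R) - 2 * ((x \in X)%:R).
  move=> x; rewrite -chiM (_ : x * (x ^+ 2 + -1) = f x); last by rewrite /f; ring.
  have ef : f x = x * (x - 1) * (x + 1) by rewrite /f; ring.
  rewrite inE.
  have e01 : ((0:F) == 1) = false by rewrite eq_sym oner_eq0.
  have e0m : ((0:F) == -1) = false by rewrite eq_sym oppr_eq0 oner_eq0.
  have e1m : ((1:F) == -1) = false by exact: (negbTE one_neq_m1).
  have em1 : ((-1:F) == 1) = false by rewrite eq_sym.
  have ez : ((0:int) == -1) = false by [].
  have [->|x0] := eqVneq x 0.
    rewrite (_ : f 0 = 0) ?chi0; last by rewrite /f; ring.
    by rewrite ?eqxx ?e01 ?e0m ?e1m ?em1 ?ez.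
  have [->|x1] := eqVneq x 1.
    rewrite (_ : f 1 = 0) ?chi0; last by rewrite /f; ring.
    by rewrite ?eqxx ?e01 ?e0m ?e1m ?em1 ?ez.
  have [->|x2] := eqVneq x (-1).
    rewrite (_ : f (-1) = 0) ?chi0; last by rewrite /f; ring.
    by rewrite ?eqxx ?e01 ?e0m ?e1m ?em1 ?ez.
  have fx0 : f x != 0.
    by rewrite ef !mulf_neq0 // ?subr_eq0 ?addr_eq0.
  by case: (chi_cases fx0) => ->.
rewrite /phi (eq_bigr _ (fun x _ => h1 x)) !sumrB !big_split /= !sum_delta1.
rewrite -mulr_sumr sum_ind sumr_const (_ : #|xpredT| = #|F|) // hq.
rewrite (_ : #|in_mem^~ (mem X)| = #|X|) //.
Qed.

Lemma ec_count : (#|ec_points (-1 : F) 0| : int) = 1 + ((2 * m).+1)%:R + phi (-1).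
Proof.
set B := [set xy : F * F | xy.2 ^+ 2 == xy.1 ^+ 3 + -1 * xy.1 + 0].
have -> : ec_points (-1 : F) 0 = None |: (Some @: B).
  apply/setP => [[[x y]|]]; rewrite !inE //=.
  apply/idP/imsetP => [h|[[x' y'] hB [-> ->]]]; last by rewrite inE in hB.
  by exists (x, y); rewrite ?inE.
rewrite cardsU1 card_imset; last by move=> ? ? [].
rewrite (_ : None \notin _); last by apply/imsetP => [[]].
have -> : #|B| = (\sum_(x : F) #|[set y : F | y ^+ 2 == f x]|)%N.
  rewrite -sum1_card big_mkcond /=.
  transitivity (\sum_(x : F) \sum_(y : F) (if (x, y) \in B then 1 else 0))%N.
    by rewrite pair_big /=; apply: eq_bigr => -[x y] _.
  apply: eq_bigr => x _; rewrite -sum1_card [RHS]big_mkcond /=; apply: eq_bigr => y _.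
  by rewrite !inE /f addr0 mulN1r.
rewrite -natz natrD natr_sum; under eq_bigr do rewrite natz sq_card.
rewrite big_split /= sumr_const.
rewrite (_ : #|xpredT| = #|F|) // hq addrA; congr (_ + _ + _).
rewrite /phi; apply: eq_bigr => x _; rewrite -chiM /f; congr chi; ring.
Qed.

Lemma final (b c : int) : prime #|F| -> (#|F| : int) = 1 + b ^+ 2 -> b = 2 * c ->
  (#|ec_points (-1 : F) 0| : int) = (2 * m)%:R.
Proof.
move=> pr hF hb.
have [n0 hn0] := exists_nonsq.
have h4 := four_sq hn0.
have hS := phi_m1.
have [j hj] := dvdnP card_X4.
have [m' hm'] := dvdnP m4.
have hS' : phi (-1) = 8 * (m'%:Z - j%:Z) - 2.
  by rewrite hS hj hm'; rewrite !natz; lia.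
have h4' : phi (-1) ^+ 2 + phi n0 ^+ 2 = 4 * (#|F| : int).
  by rewrite h4 hq natz; lia.
have := nt pr hF hb h4' hS' => e.
by rewrite ec_count e natz; lia.
Qed.

End Main.

Close Scope ring_scope.

Theorem corollary3 (p n : nat) :
  0 < p -> 0 < n -> prime (p ^ 2 * 16 ^ n + 1) ->
  #|ec_points (F := 'F_(p ^ 2 * 16 ^ n + 1)) (-1)%R 0%R| = p ^ 2 * 16 ^ n.
Proof.
move=> p0 n0 pr.
have cF : #|'F_(p ^ 2 * 16 ^ n + 1)| = p ^ 2 * 16 ^ n + 1 := card_Fp pr.
have [n' en] : exists n', n = n'.+1 by exists n.-1; rewrite prednK.
pose m := p ^ 2 * 8 * 16 ^ n'.
have e16 : 16 ^ n = 16 * 16 ^ n' by rewrite en expnS.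
have hq : #|'F_(p ^ 2 * 16 ^ n + 1)| = (2 * m).+1.
  by rewrite cF /m e16; set a := p ^ 2; set d := 16 ^ n'; nia.
have m4 : 4 %| m by rewrite /m -mulnA dvdn_mull // dvdn_mulr.
have m0 : 0 < m by rewrite /m !muln_gt0 expn_gt0 p0.
have two_nz : (2%:R : 'F_(p ^ 2 * 16 ^ n + 1))%R != 0%R.
  rewrite -(dvdn_pcharf (pchar_Fp pr)); apply/negP => /(dvdn_leq (isT : 0 < 2)).
  have : 0 < p ^ 2 by rewrite expn_gt0 p0.
  have : 0 < 16 ^ n' by rewrite expn_gt0.
  rewrite e16; set a := p ^ 2; set d := 16 ^ n'; nia.
have e4 : (p * 4 ^ n) ^ 2 = p ^ 2 * 16 ^ n.
  by rewrite expnMn; congr (_ * _); rewrite -expnM mulnC expnM.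
have hF : (#|'F_(p ^ 2 * 16 ^ n + 1)| : int) = (1 + ((p * 4 ^ n)%:R) ^+ 2)%R.
  by rewrite cF -natrX e4 -natz natrD addrC.
have hb : ((p * 4 ^ n)%:R : int) = (2 * (p * 2 * 4 ^ n')%:R)%R.
  rewrite -natrM; congr (GRing.natmul 1 _); rewrite en expnS.
  set d := 4 ^ n'; nia.
have prF : prime #|'F_(p ^ 2 * 16 ^ n + 1)| by rewrite cF.
have := @final _ m hq m4 m0 two_nz _ _ prF hF hb.
rewrite natz => -[->].
by rewrite /m e16; set a := p ^ 2; set d := 16 ^ n'; nia.
Qed.
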